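(* Let $mG$ be a finite canonical misinformation game and let $mG'\in\mathcal{AD}^*(\{mG\})$ satisfy $\mathcal{AD}(\{mG'\})=\{mG'\}$. Then $NME(mG')\subseteq SME(mG)$.
   Context: A normal-form game is $G=\langle N,S,P\rangle$ with finite players $N$, finite pure strategy sets $S_i$, positions $S=\times_i S_i$, payoffs $P_i:S\to\mathbb{R}$. A misinformation game $mG=\langle G^0,G^1,\dots,G^{|N|}\rangle$ consists of the actual game $G^0$ and subjective games $G^i$; it is canonical if all $G^i=\langle N,S,P^i\rangle$ differ from $G^0$ only in payoffs and in every $G^i$ all players have equally many pure strategies. $NME(mG)$ is the set of profiles $\sigma=(\sigma_1,\dots,\sigma_{|N|})$ such that each $\sigma_i$ is player $i$'s component of some Nash equilibrium of $G^i$. $\chi(\sigma)=\mathrm{supp}(\sigma_1)\times\dots\times\mathrm{supp}(\sigma_{|N|})$. For $\vec v\in S$, $mG_{\vec v}$ is obtained by replacing, in every $P^i$ ($i\ge1$), the payoff vector at position $\vec v$ by $P^0(\vec v)$. For a set $M$ of misinformation games, $\mathcal{AD}(M)=\{mG_{\vec u}: mG\in M,\sigma\in NME(mG),\vec u\in\chi(\sigma)\}$, $\mathcal{AD}^{(0)}(M)=M$, $\mathcal{AD}^{(t+1)}(M)=\mathcal{AD}^{(t)}(\mathcal{AD}(M))$, $\mathcal{AD}^*(M)=\bigcup_{t\ge0}\mathcal{AD}^{(t)}(M)$; the length $\mathfrak{L}$ is the least $t\ge0$ with $\mathcal{AD}^{(t+1)}(M)=\mathcal{AD}^{(t)}(M)$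 and $\mathcal{AD}^\infty(M)=\mathcal{AD}^{(\mathfrak{L})}(M)$. A profile $\sigma$ is a stable misinformed equilibrium of $mG$ if there is $\widehat{mG}\in\mathcal{AD}^\infty(\{mG\})$ with $\sigma\in NME(\widehat{mG})$ and $\widehat{mG}_{\vec v}=\widehat{mG}$ for all $\vec v\in\chi(\sigma)$; $SME(mG)$ is the set of these. *)

(* Defs.v *)
From HB Require Import structures.
From mathcomp Require Import all_boot all_order all_algebra.
From mathcomp Require Import reals.
Set Implicit Arguments. Unset Strict Implicit. Unset Printing Implicit Defensive.
Import Order.TTheory GRing.Theory Num.Theory.
Local Open Scope ring_scope.

(* A canonical misinformation game: all games G^0,...,G^n share N and S and
   differ only in payoffs, so a game is just its payoff function
   P : S -> R^N  (S = positions), and a misinformation game is a family of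
   payoffs indexed by option 'I_n  (None = actual game G^0, Some i = G^i). *)

Section MisinformationGames.
Variable R : realType.
Variable n : nat.
Variable S : 'I_n -> finType.

Definition position : finType := {dffun forall i : 'I_n, S i}.
Definition payoff := {ffun position -> {ffun 'I_n -> R}}.
Definition mgame := {ffun option 'I_n -> payoff}.

Definition mixed_strategy (i : 'I_n) (x : {ffun S i -> R}) : Prop :=
  (forall a, 0 <= x a) /\ \sum_a x a = 1.
Definition profile := forall i : 'I_n, {ffun S i -> R}.
Definition is_profile (sg : profile) : Prop := forall i, mixed_strategy (sg i).

Definition exp_payoff (P : payoff) (i : 'I_n) (sg : profile) : R :=
  \sum_(s : position) (\prod_(j : 'I_n) sg j (s j)) * P s i.
Definition dev_payoff (P : payoff) (i : 'I_n) (sg : profile)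
    (tau : {ffun S i -> R}) : R :=
  \sum_(s : position) (tau (s i) * \prod_(j | j != i) sg j (s j)) * P s i.
Arguments dev_payoff P i sg tau : clear implicits.

Definition nash (P : payoff) (sg : profile) : Prop :=
  is_profile sg /\
  forall i (tau : {ffun S i -> R}), mixed_strategy tau ->
    dev_payoff P i sg tau <= exp_payoff P i sg.

Definition NME (mg : mgame) (sg : profile) : Prop :=
  forall i : 'I_n, exists tau, nash (mg (Some i)) tau /\ sg i = tau i.

Definition in_chi (sg : profile) (v : position) : Prop :=
  forall i : 'I_n, sg i (v i) != 0.

Definition mg_upd (mg : mgame) (v : position) : mgame :=
  [ffun k : option 'I_n =>
     if k is Some _ then
       [ffun s : position => if s == v then mg None v else mg k s] : payoff
     else mg None].

Definition mgset := mgame -> Prop.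
Definition single (mg : mgame) : mgset := fun g => g = mg.
Definition set_eq (A B : mgset) : Prop := forall g, A g <-> B g.

Definition AD (M : mgset) : mgset := fun g =>
  exists mg sg v, [/\ M mg, NME mg sg, in_chi sg v & g = mg_upd mg v].

Fixpoint ADn (t : nat) (M : mgset) : mgset :=
  match t with
  | O => M
  | t'.+1 => ADn t' (AD M)
  end.

Definition ADstar (M : mgset) : mgset := fun g => exists t, ADn t M g.

Definition is_length (M : mgset) (L : nat) : Prop :=
  set_eq (ADn L.+1 M) (ADn L M) /\
  forall t, (t < L)%N -> ~ set_eq (ADn t.+1 M) (ADn t M).

Definition ADinf (M : mgset) : mgset := fun g =>
  exists L, is_length M L /\ ADn L M g.

Definition SME (mg : mgame) (sg : profile) : Prop :=
  exists mh, [/\ ADinf (single mg) mh, NME mh sg &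
                 forall v, in_chi sg v -> mg_upd mh v = mh].

End MisinformationGames.

(* Main.v *)
Require Import Defs.
From HB Require Import structures.
From mathcomp Require Import all_boot all_order all_algebra.
From mathcomp Require Import reals.
From Stdlib Require Import Classical.
From mathcomp Require Import zify.

Set Implicit Arguments. Unset Strict Implicit. Unset Printing Implicit Defensive.

Section Aux.
Variable R : realType.
Variable n : nat.
Variable S : 'I_n -> finType.

Local Notation mg_t := (mgame R S).

Definition step (h k : mg_t) : Prop :=
  exists sg v, [/\ NME h sg, in_chi sg v & k = mg_upd h v].

Fixpoint walk (t : nat) (g k : mg_t) : Prop :=
  match t with
  | O => k = g
  | t'.+1 => exists h, walk t' g h /\ step h k
  end.

Lemma ADnS t (M : mgset R S) : ADn t.+1 M = AD (ADn t M).
Proof. by elim: t M => [|t IH] M //=; rewrite -IH. Qed.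

Lemma ADn_walk t (M : mgset R S) k :
  ADn t M k <-> exists g, M g /\ walk t g k.
Proof.
elim: t k => [|t IH] k.
  by split=> [Mk|[g [Mg ->]]] //; exists k.
rewrite ADnS; split.
  move=> [h [sg [v [Hh Hn Hc ->]]]].
  have [g [Mg W]] := (IH h).1 Hh.
  exists g; split=> //; exists h; split=> //; exists sg, v; by split.
move=> [g [Mg [h [W [sg [v [Hn Hc ->]]]]]]].
exists h, sg, v; split=> //; apply/IH; exists g; by split.
Qed.

Definition Kset (g : mg_t) : {set position S} :=
  [set v | [forall i, g (Some i) v == g None v]].

Definition mu (g : mg_t) := #|Kset g|.

Lemma mu_le g : (mu g <= #|position S|)%N.
Proof. exact: max_card. Qed.

Lemma step_mu h k : step h k -> k = h \/ (mu h < mu k)%N.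
Proof.
move=> [sg [v [_ _ ->]]].
have KE : Kset (mg_upd h v) = v |: Kset h.
  apply/setP=> s; rewrite !inE.
  case: (eqVneq s v) => [->|nsv] /=.
    by apply/forallP=> i; rewrite !ffunE eqxx.
  apply/forallP/forallP=> H i; have := H i; rewrite !ffunE (negbTE nsv) //.
case: (boolP (v \in Kset h)) => vK.
  left; apply/ffunP=> [[i|]]; rewrite ffunE //.
  apply/ffunP=> s; rewrite ffunE.
  case: (eqVneq s v) => [->|//].
  by move: vK; rewrite inE => /forallP /(_ i) /eqP ->.
right; rewrite /mu KE cardsU1 vK; done.
Qed.

Lemma walk_up t g k : walk t g k -> (mu g + t <= mu k)%N \/ walk t.+1 g k.
Proof.
elim: t k => [|t IH] k /=.
  by move=> ->; left; rewrite addn0.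
move=> [h [W St]].
have [Ekh|lt] := step_mu St.
  subst k; right; exists h; split; last by move: St => [sg [v [A B C]]]; exists sg, v; by split.
  by exists h; split.
have [le|W'] := IH h W.
  by left; rewrite addnS; apply: leq_ltn_trans lt.
by right; exists h; split.
Qed.

Lemma walk_down t g k : walk t.+1 g k -> (mu g + t.+1 <= mu k)%N \/ walk t g k.
Proof.
elim: t k => [|t IH] k /=.
  move=> [h [-> St]].
  by have [->|lt] := step_mu St; [right | left; rewrite addn1].
move=> [h [W St]].
have [Ekh|lt] := step_mu St.
  by subst k; right.
have [le|W'] := IH h W.
  by left; rewrite addnS; apply: leq_ltn_trans lt.
by right; exists h; split.
Qed.

Lemma stab (M : mgset R S) :
  set_eq (ADn (#|position S|.+1).+1 M) (ADn #|position S|.+1 M).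
Proof.
move=> k; rewrite !ADn_walk; split=> [[g [Mg W]]|[g [Mg W]]]; exists g; split=> //.
  have [le|//] := walk_down W.
  have := leq_trans le (mu_le k); lia.
have [le|//] := walk_up W.
have := leq_trans le (mu_le k); lia.
Qed.

Lemma AD_seteq (A B : mgset R S) : set_eq A B -> set_eq (AD A) (AD B).
Proof.
move=> E k; split=> [[g [sg [v [Ag H1 H2 H3]]]]|[g [sg [v [Ag H1 H2 H3]]]]];
  exists g, sg, v; split=> //; by apply/E.
Qed.

Lemma stab_all (M : mgset R S) L m :
  set_eq (ADn L.+1 M) (ADn L M) -> set_eq (ADn (L + m) M) (ADn L M).
Proof.
move=> E; elim: m => [|m IH] k; first by rewrite addn0.
rewrite addnS ADnS; split=> H.
  by apply/E; rewrite ADnS; apply/(AD_seteq IH).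
by apply/(AD_seteq IH); rewrite -ADnS; apply/E.
Qed.

Lemma least (P : nat -> Prop) T : P T -> exists L, P L /\ forall t, (t < L)%N -> ~ P t.
Proof.
elim/ltn_ind: T => T IH PT.
case: (classic (exists t, (t < T)%N /\ P t)) => [[t [lt Pt]]|N].
  exact: IH lt Pt.
exists T; split=> // t lt Pt; apply: N; by exists t.
Qed.

End Aux.

Theorem proposition14 (R : realType) (n : nat) (S : 'I_n -> finType)
    (mg mg' : mgame R S) :
  ADstar (single mg) mg' ->
  set_eq (AD (single mg')) (single mg') ->
  forall sg : profile R S, NME mg' sg -> SME mg sg.
Proof.
move=> [t Ht] Efix sg Hsg.
have loop : step mg' mg'.
  have : AD (single mg') mg' by apply/Efix.
  by move=> [g [sg' [v [-> H1 H2 H3]]]]; exists sg', v; by split.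
have [L [EL minL]] := @least (fun L => set_eq (ADn L.+1 (single mg)) (ADn L (single mg))) _ (stab (single mg)).
exists mg'; split=> //; last first.
  move=> v Hv; apply/Efix; exists mg', sg, v; by split.
exists L; split; first by split.
have up : forall m, ADn (t + m) (single mg) mg'.
  elim=> [|m IH]; first by rewrite addn0.
  rewrite addnS ADnS.
  move: loop => [sg' [v [H1 H2 H3]]].
  by exists mg', sg', v; split.
apply: ((stab_all t EL mg').1); rewrite addnC; exact: up.
Qed.
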